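(* Let $\mathbb F$ be algebraically closed with $\operatorname{char}\mathbb F\ne2$, and let $a,b,c,\nu\in\mathbb F$. There exists an $\Re$-module $M_\nu(a,b,c)$ with an $\mathbb F$-basis $\{m_i\}_{i=0}^\infty$ such that $Am_i=\theta_im_i+m_{i+1}$ for all $i\ge0$, $Bm_0=\theta_0^*m_0$, $Bm_i=\theta_i^*m_i+\varphi_im_{i-1}$ for all $i\ge1$, and on which $\alpha,\beta,\delta$ act as scalar multiplication by $\zeta,\zeta^*,\eta$, respectively.
   Context: The Racah algebra $\Re$ is the unital associative $\mathbb F$-algebra with generators $A,B,C,D$ and relations $[A,B]=[B,C]=[C,A]=2D$ together with the requirement that each of $\alpha:=[A,D]+AC-BA$, $\beta:=[B,D]+BA-CB$, $\gamma:=[C,D]+CB-AC$ is central in $\Re$; $\delta:=A+B+C$. For $a,b,c,\nu\in\mathbb F$ and $i\in\mathbb Z$: $\theta_i=(a+\tfrac\nu2-i)(a+\tfrac\nu2-i+1)$, $\theta_i^*=(b+\tfrac\nu2-i)(b+\tfrac\nu2-i+1)$, $\varphi_i=i(i-\nu-1)(a+b+c+\tfrac\nu2-i+2)(a+b-c+\tfrac\nu2-i+1)$, $\zeta=(c-b)(c+b+1)(a-\tfrac\nu2)(a+\tfrac\nu2+1)$, $\zeta^*=(a-c)(a+c+1)(b-\tfrac\nu2)(b+\tfrac\nu2+1)$, $\eta=\tfrac\nu2(\tfrac\nu2+1)+a(a+1)+b(b+1)+c(c+1)$. *)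

(* Defs.v *)
From HB Require Import structures.
From mathcomp Require Import all_boot all_order all_algebra.
Set Implicit Arguments. Unset Strict Implicit. Unset Printing Implicit Defensive.
Import Order.TTheory GRing.Theory Num.Theory.
Local Open Scope ring_scope.

Section Racah.
Variable F : fieldType.

Definition rc_theta (a nu : F) (i : nat) : F :=
  (a + nu / 2%:R - i%:R) * (a + nu / 2%:R - i%:R + 1).
Definition rc_thetas (b nu : F) (i : nat) : F :=
  (b + nu / 2%:R - i%:R) * (b + nu / 2%:R - i%:R + 1).
Definition rc_phi (a b c nu : F) (i : nat) : F :=
  i%:R * (i%:R - nu - 1) * (a + b + c + nu / 2%:R - i%:R + 2%:R)
  * (a + b - c + nu / 2%:R - i%:R + 1).
Definition rc_zeta (a b c nu : F) : F :=
  (c - b) * (c + b + 1) * (a - nu / 2%:R) * (a + nu / 2%:R + 1).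
Definition rc_zetas (a b c nu : F) : F :=
  (a - c) * (a + c + 1) * (b - nu / 2%:R) * (b + nu / 2%:R + 1).
Definition rc_eta (a b c nu : F) : F :=
  nu / 2%:R * (nu / 2%:R + 1) + a * (a + 1) + b * (b + 1) + c * (c + 1).

Variable V : lmodType F.

Definition ralpha (A B C D : V -> V) (v : V) : V :=
  A (D v) - D (A v) + A (C v) - B (A v).
Definition rbeta (A B C D : V -> V) (v : V) : V :=
  B (D v) - D (B v) + B (A v) - C (B v).
Definition rgamma (A B C D : V -> V) (v : V) : V :=
  C (D v) - D (C v) + C (B v) - A (C v).

Definition commutes_with_gens (A B C D X : V -> V) : Prop :=
  forall v, [/\ X (A v) = A (X v), X (B v) = B (X v),
                X (C v) = C (X v) & X (D v) = D (X v)].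

Definition racah_module (A B C D : {linear V -> V}) : Prop :=
  [/\ forall v, A (B v) - B (A v) = D v *+ 2,
      forall v, B (C v) - C (B v) = D v *+ 2,
      forall v, C (A v) - A (C v) = D v *+ 2 &
      [/\ commutes_with_gens A B C D (ralpha A B C D),
      commutes_with_gens A B C D (rbeta A B C D) &
      commutes_with_gens A B C D (rgamma A B C D)]].

Definition is_basis (m : nat -> V) : Prop :=
  (forall (n : nat) (k : nat -> F),
      \sum_(i < n) k i *: m i = 0 -> forall i, (i < n)%N -> k i = 0)
  /\ (forall v : V, exists (n : nat) (k : nat -> F), v = \sum_(i < n) k i *: m i).

End Racah.

(* Main.v *)
Require Import Defs.
From HB Require Import structures.
From mathcomp Require Import all_boot all_order all_algebra.
From mathcomp Require Import ring.
Import GRing.Theory.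
Local Open Scope ring_scope.

Section Constr.
Variables (F : fieldType) (a b c nu : F).

Definition th j := rc_theta a nu j.
Definition ts j := rc_thetas b nu j.
Definition ph j := rc_phi a b c nu j.

Definition Aop : {poly F} -> {poly F} := locked (fun p : {poly F} =>
  \poly_(j < size p) (th j * p`_j) + 'X * p).
Definition Bop : {poly F} -> {poly F} := locked (fun p : {poly F} =>
  \poly_(j < size p) (ts j * p`_j) + \poly_(j < size p) (ph j.+1 * p`_j.+1)).

Lemma coefA0 p : (Aop p)`_0 = th 0 * p`_0.
Proof.
rewrite /Aop -lock coefD coefXM coef_poly /=; case: ltnP => H; first by rewrite addr0.
by rewrite nth_default // mulr0 addr0.
Qed.

Lemma coefAS p j : (Aop p)`_j.+1 = th j.+1 * p`_j.+1 + p`_j.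
Proof.
rewrite /Aop -lock coefD coefXM coef_poly /=; case: ltnP => H //.
by rewrite (nth_default _ H) mulr0.
Qed.

Lemma coefBop p j : (Bop p)`_j = ts j * p`_j + ph j.+1 * p`_j.+1.
Proof.
rewrite /Bop -lock coefD !coef_poly; case: ltnP => H //.
by rewrite (nth_default _ H) (@nth_default _ _ p j.+1) ?mulr0 ?addr0 // (leq_trans H).
Qed.

Lemma Aop_lin : linear Aop.
Proof.
move=> k p q; apply/polyP => j.
case: j => [|j]; rewrite !(coefA0, coefAS, coefD, coefZ); ring.
Qed.

Lemma Bop_lin : linear Bop.
Proof.
move=> k p q; apply/polyP => j; rewrite !(coefBop, coefD, coefZ); ring.
Qed.

HB.instance Definition _ := GRing.isLinear.Build F {poly F} {poly F} *:%R Aop Aop_lin.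
HB.instance Definition _ := GRing.isLinear.Build F {poly F} {poly F} *:%R Bop Bop_lin.


Definition Cop (p : {poly F}) : {poly F} := rc_eta a b c nu *: p - Aop p - Bop p.
Definition Dop (p : {poly F}) : {poly F} := 2%:R^-1 *: (Aop (Bop p) - Bop (Aop p)).

Lemma Cop_lin : linear Cop.
Proof.
move=> k p q; rewrite /Cop !linearP; apply/polyP => j.
rewrite !(coefD, coefZ, coefB); ring.
Qed.

Lemma Dop_lin : linear Dop.
Proof.
move=> k p q; rewrite /Dop !linearP; apply/polyP => j.
rewrite !(coefD, coefZ, coefB); ring.
Qed.

HB.instance Definition _ := GRing.isLinear.Build F {poly F} {poly F} *:%R Cop Cop_lin.
HB.instance Definition _ := GRing.isLinear.Build F {poly F} {poly F} *:%R Dop Dop_lin.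

Hypothesis H2 : (2%:R : F) != 0.

Lemma alphaE p : ralpha Aop Bop Cop Dop p = rc_zeta a b c nu *: p.
Proof.
apply/polyP => j; rewrite /ralpha /Cop /Dop.
case: j => [|[|j]];
rewrite !(coefD, coefN, coefZ, coefB, coefA0, coefAS, coefBop);
rewrite /th /ts /ph /rc_theta /rc_thetas /rc_phi /rc_zeta /rc_eta; field; exact: H2.
Qed.

Ltac crunch := rewrite !(coefD, coefN, coefZ, coefB, coefA0, coefAS, coefBop);
  rewrite /th /ts /ph /rc_theta /rc_thetas /rc_phi /rc_zeta /rc_zetas /rc_eta; field; exact: H2.

Lemma betaE p : rbeta Aop Bop Cop Dop p = rc_zetas a b c nu *: p.
Proof.
apply/polyP => j; rewrite /rbeta /Cop /Dop.
case: j => [|[|j]]; crunch.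
Qed.

Lemma gammaE p : rgamma Aop Bop Cop Dop p = - (rc_zeta a b c nu + rc_zetas a b c nu) *: p.
Proof.
apply/polyP => j; rewrite /rgamma /Cop /Dop.
case: j => [|[|j]]; crunch.
Qed.

Lemma rel1 v : Aop (Bop v) - Bop (Aop v) = Dop v *+ 2.
Proof. by rewrite /Dop -scaler_nat scalerA mulfV // scale1r. Qed.

Lemma rel2 v : Bop (Cop v) - Cop (Bop v) = Dop v *+ 2.
Proof.
rewrite -rel1 /Cop !linearB !linearZ /=; apply/polyP => j.
rewrite !(coefD, coefB, coefN, coefZ); ring.
Qed.

Lemma rel3 v : Cop (Aop v) - Aop (Cop v) = Dop v *+ 2.
Proof.
rewrite -rel1 /Cop !linearB !linearZ /=; apply/polyP => j.
rewrite !(coefD, coefB, coefN, coefZ); ring.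
Qed.

Lemma sumE v : Aop v + Bop v + Cop v = rc_eta a b c nu *: v.
Proof. rewrite /Cop; apply/polyP => j; rewrite !(coefD, coefB, coefN, coefZ); ring. Qed.

Lemma diagX (f : nat -> F) i :
  \poly_(j < size ('X^i : {poly F})) (f j * 'X^i`_j) = f i *: 'X^i.
Proof.
apply/polyP => j; rewrite coef_poly coefZ !coefXn size_polyXn.
case: eqP => [->|_]; rewrite ?ltnSn ?mulr1 ?mulr0 //; by case: ifP.
Qed.

Lemma AX i : Aop 'X^i = th i *: 'X^i + 'X^(i.+1).
Proof. by rewrite /Aop -lock diagX exprS. Qed.

Lemma BX i : Bop 'X^i = ts i *: 'X^i + ph i *: 'X^(i.-1).
Proof.
rewrite /Bop -lock diagX; congr (_ + _).
apply/polyP => j; rewrite coef_poly coefZ !coefXn size_polyXn.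
case: i => [|k]; first by rewrite /= mulr0 if_same /ph /rc_phi !mul0r.
rewrite eqSS /=; case: eqP => [->|_]; rewrite ?mulr1 ?mulr0 ?ltnS ?leqnSn //; by case: ifP.
Qed.

End Constr.

Lemma basisX (F : fieldType) : is_basis (fun i : nat => ('X^i : {poly F})).
Proof.
split.
  move=> n k H i lt_in; have := congr1 (fun p : {poly F} => p`_i) H.
  by rewrite /= -poly_def coef_poly lt_in coef0.
move=> v; exists (size v), (fun i => v`_i); by rewrite -poly_def coefK.
Qed.

Theorem proposition3p1 (F : closedFieldType) (a b c nu : F) :
  2 \notin [pchar F] ->
  exists (V : lmodType F) (A B C D : {linear V -> V}) (m : nat -> V),
    [/\ racah_module A B C D,
        is_basis m &
        [/\ forall i : nat, A (m i) = rc_theta a nu i *: m i + m i.+1,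
        B (m 0%N) = rc_thetas b nu 0 *: m 0%N,
        forall i : nat, (1 <= i)%N ->
          B (m i) = rc_thetas b nu i *: m i + rc_phi a b c nu i *: m i.-1 &
        forall v : V,
          [/\ ralpha A B C D v = rc_zeta a b c nu *: v,
              rbeta A B C D v = rc_zetas a b c nu *: v &
              A v + B v + C v = rc_eta a b c nu *: v]]].
Proof.
move=> Hc.
have H2 : (2%:R : F) != 0.
  apply: contra Hc => H; by rewrite inE /=.
exists {poly F}, (@Aop F a nu), (@Bop F a b c nu), (@Cop F a b c nu), (@Dop F a b c nu), (fun i => 'X^i).
split.
- split; [exact: rel1 | exact: rel2 | exact: rel3 |].
  split; move=> v; split;
  rewrite ?(@alphaE F a b c nu H2) ?(@betaE F a b c nu H2) ?(@gammaE F a b c nu H2); exact/esym/linearZ.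
- exact (@basisX F).
- split.
  + exact: AX.
  + etransitivity; first exact: (@BX F a b c nu 0).
    by rewrite /ph /rc_phi mul0r !mul0r scale0r addr0.
  + move=> i _; exact: BX.
  + move=> v; split; [exact: alphaE | exact: betaE | exact: sumE].
Qed.
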